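(* Let $k\ge2$ and $1\le n\le \ell$. Then $D_k(\ell)\le D_k(n)\,k^{\ell-n}$.
   Context: Labeled chip-firing on the infinite rooted directed $k$-ary tree (each vertex has $k$ children ordered left to right, root on layer $1$): a vertex with at least $k$ chips may fire by choosing any $k$ of its chips and sending the $i$-th smallest label among them to its $i$-th leftmost child; a configuration is stable when no vertex has $\ge k$ chips. Starting with $k^\ell$ chips labeled $1,\dots,k^\ell$ at the root, every stable configuration has exactly one chip on each vertex of layer $\ell+1$ and none elsewhere, and is identified with the permutation of labels read left to right on layer $\ell+1$. $D_k(\ell)$ denotes the maximum, over all reachable stable configurations, of the length of the longest strictly decreasing subsequence of the corresponding permutation. *)

(* Defs.v *)
From mathcomp Require Import all_boot.
From mathcomp Require Import boolp.
Set Implicit Arguments. Unset Strict Implicit. Unset Printing Implicit Defensive.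

(* Vertices of the infinite rooted k-ary tree are encoded by the path from the
   root: a sequence of child indices (0-based, 0 = leftmost).  The root is
   [::] (layer 1); a vertex w lies on layer (size w).+1.  Sequences containing
   an entry >= k are not tree vertices; they never receive chips. *)
Definition vertex := seq nat.

(* A configuration assigns to each vertex the multiset (as a list) of labels
   of the chips sitting on it. *)
Definition config := vertex -> seq nat.

Definition is_child (k : nat) (v w : vertex) : bool :=
  [&& size w == (size v).+1, take (size v) w == v & last 0 w < k].

Definition fire_step (k : nat) (C C' : config) : Prop :=
  exists (v : vertex) (S rest : seq nat),
    [/\ size S = k, perm_eq (C v) (S ++ rest) &
        forall w : vertex, C' w =
          if w == v then rest
          else if is_child k v w then C w ++ [:: nth 0 (sort leq S) (last 0 w)]
          else C w].

Inductive reaches (k : nat) : config -> config -> Prop :=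
  | reaches_refl C : reaches k C C
  | reaches_step C C' C'' : fire_step k C C' -> reaches k C' C'' -> reaches k C C''.

Definition init_config (k l : nat) : config :=
  fun w => if w == [::] then iota 1 (k ^ l) else [::].

Definition stable (k : nat) (C : config) : Prop := forall w : vertex, size (C w) < k.

Definition reachable_stable (k l : nat) (C : config) : Prop :=
  reaches k (init_config k l) C /\ stable k C.

(* The j-th vertex (0-based, left to right) of layer l+1: base-k digits of j,
   most significant first. *)
Definition layer_vertex (k l j : nat) : vertex :=
  [seq (j %/ k ^ (l - i.+1)) %% k | i <- iota 0 l].

(* The permutation read left to right on layer l+1 (one chip per vertex). *)
Definition perm_of (k l : nat) (C : config) : seq nat :=
  [seq head 0 (C (layer_vertex k l j)) | j <- iota 0 (k ^ l)].

Definition lds (s : seq nat) : nat :=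
  \max_(m : (size s).-tuple bool | sorted gtn (mask m s)) size (mask m s).

(* D_k(l): maximum of lds over reachable stable configurations
   (lds of perm_of is at most its size k^l). *)
Definition D (k l : nat) : nat :=
  \max_(m < (k ^ l).+1 |
        `[< exists C : config, reachable_stable k l C /\ lds (perm_of k l C) = m >]) m.

(* Main.v *)
Require Import Defs.
From mathcomp Require Import all_boot boolp zify.
Set Implicit Arguments. Unset Strict Implicit. Unset Printing Implicit Defensive.

Definition tree (k : nat) (w : vertex) := all (fun i => i < k) w.
Definition parent (w : vertex) : vertex := take (size w).-1 w.

Lemma parent_rcons (p : vertex) i : parent (rcons p i) = p.
Proof. by rewrite /parent size_rcons /= -cats1 take_size_cat. Qed.

Lemma is_childP k v w : is_child k v w -> w = rcons v (last 0 w) /\ last 0 w < k.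
Proof.
case/lastP: w => [|p i]; first by rewrite /is_child.
rewrite /is_child size_rcons last_rcons eqSS => /and3P[/eqP Hs Ht Hk].
split=> //; move: Ht; rewrite -Hs -cats1 take_size_cat //.
by move/eqP->; rewrite cats1.
Qed.

Lemma is_child_rcons k v i : i < k -> is_child k v (rcons v i).
Proof.
move=> Hi; rewrite /is_child size_rcons eqxx last_rcons Hi /= andbT.
by rewrite -cats1 take_size_cat.
Qed.

Definition inflow k m (g : vertex -> nat) (w : vertex) :=
  if w is [::] then m else if tree k w then g (parent w) else 0.

Lemma inflow_rcons k m g p i :
  inflow k m g (rcons p i) = if tree k (rcons p i) then g p else 0.
Proof. by rewrite /inflow; case: p => [|a p] //=; rewrite -rcons_cons parent_rcons. Qed.

Definition Inv k m (C : config) :=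
  exists g : vertex -> nat, forall w, size (C w) + k * g w = inflow k m g w.

Lemma tree_rcons k p i : tree k (rcons p i) = tree k p && (i < k).
Proof. by rewrite /tree all_rcons andbC. Qed.

Lemma Inv_step k m C C' : 0 < k -> Inv k m C -> fire_step k C C' -> Inv k m C'.
Proof.
move=> k0 [g Hg] [v [S [rest [HS Hp HC']]]].
exists (fun w => g w + (w == v)) => w.
have Hsz : size (C v) = k + size rest by rewrite (perm_size Hp) size_cat HS.
have Htv : tree k v.
  case/lastP: v Hsz {Hp HC'} (Hg v) => [|p i] //.
  rewrite inflow_rcons; case: ifP => // _ Hsz; rewrite Hsz; lia.
rewrite HC'.
case/lastP: w => [|p i].
  case: (eqVneq ([::] : vertex) v) => [Ev|Hv].
    have := Hg [::]; rewrite /= => H; rewrite -H Ev Hsz; lia.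
  rewrite /is_child /= addn0; exact: Hg.
rewrite inflow_rcons.
case: (eqVneq (rcons p i) v) => [Ev|Hwv].
  rewrite /= addn1 mulnS -Ev.
  have := Hg (rcons p i); rewrite inflow_rcons.
  have -> : (p == rcons p i) = false.
    by apply/negbTE/eqP => E; have := congr1 size E; rewrite size_rcons; lia.
  rewrite -Ev in Hsz; rewrite Hsz; case: ifP => _ /=; lia.
case: ifP => Hch.
  have [Ew Hl] := is_childP Hch.
  move: Ew Hl; rewrite last_rcons => /eqP; rewrite eqseq_rcons eqxx andbT => /eqP Epv Hl.
  subst p.
  rewrite size_cat /= addn0 eqxx tree_rcons Htv Hl /=.
  have := Hg (rcons v i); rewrite inflow_rcons tree_rcons Htv Hl /= => H.
  rewrite -H; lia.
have := Hg (rcons p i); rewrite inflow_rcons /= addn0 => ->.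
case: ifP => // Ht.
case: (eqVneq p v) => [Epv|]; last by rewrite /= addn0.
subst p; move: Ht; rewrite tree_rcons => /andP[_ Hi].
by rewrite is_child_rcons in Hch.
Qed.

Lemma Inv_reaches k m C C' : 0 < k -> reaches k C C' -> Inv k m C -> Inv k m C'.
Proof. move=> k0; elim=> // C1 C2 C3 Hs _ IH HI; exact/IH/(Inv_step k0 HI Hs). Qed.

Lemma Inv_stable k m C : 0 < k -> Inv k m C -> stable k C ->
  forall w, tree k w -> size (C w) = (m %/ k ^ size w) %% k.
Proof.
move=> k0 [g Hg] Hst.
suff H : forall w, tree k w -> inflow k m g w = m %/ k ^ size w.
  move=> w Hw; rewrite -H // -(Hg w) addnC mulnC modnMDl modn_small //; exact: Hst.
elim/last_ind => [|p i IH]; first by rewrite /= expn0 divn1.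
rewrite tree_rcons inflow_rcons => /andP[Hp Hi]; rewrite tree_rcons Hp Hi /=.
rewrite size_rcons expnSr divnMA -IH // -(Hg p) addnC mulnC divnMDl // divn_small ?addn0 //.
Qed.

Definition Uniq (C : config) :=
  (forall w, uniq (C w)) /\ (forall w1 w2 x, x \in C w1 -> x \in C w2 -> w1 = w2).

Section Step.
Variables (k : nat) (C C' : config) (v : vertex) (S rest : seq nat).
Hypotheses (HS : size S = k) (Hp : perm_eq (C v) (S ++ rest))
  (HC' : forall w : vertex, C' w =
          if w == v then rest
          else if is_child k v w then C w ++ [:: nth 0 (sort leq S) (last 0 w)]
          else C w).

Lemma new_in_S w : is_child k v w -> nth 0 (sort leq S) (last 0 w) \in S.
Proof.
move=> /is_childP[_ Hl]; rewrite -(mem_sort leq) mem_nth // size_sort HS //.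
Qed.

Lemma S_in_Cv x : x \in S -> x \in C v.
Proof. by move=> Hx; rewrite (perm_mem Hp) mem_cat Hx. Qed.

Lemma rest_in_Cv x : x \in rest -> x \in C v.
Proof. by move=> Hx; rewrite (perm_mem Hp) mem_cat Hx orbT. Qed.

Lemma step_mem2 x w : x \in C' w ->
  [\/ w = v /\ x \in rest, w <> v /\ x \in C w |
      is_child k v w /\ x = nth 0 (sort leq S) (last 0 w)].
Proof.
rewrite HC'; case: (eqVneq w v) => [->|Hwv]; first by move=> H; apply: Or31.
case: ifP => Hc; last by move=> H; apply: Or32; split => //; exact/eqP.
rewrite mem_cat inE => /orP[H|/eqP H]; [apply: Or32; split => //; exact/eqP | exact: Or33].
Qed.

Lemma step_mem x w : x \in C' w -> x \in C w \/ (is_child k v w /\ x \in C v).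
Proof.
case/step_mem2 => [[-> H]|[_ H]|[Hc ->]]; first by left; exact: rest_in_Cv.
  by left.
by right; split=> //; apply/S_in_Cv/new_in_S.
Qed.

Lemma Uniq_step : Uniq C -> Uniq C'.
Proof.
move=> [HU1 HU2].
have HUv : uniq (S ++ rest) by rewrite -(perm_uniq Hp).
move: (HUv); rewrite cat_uniq => /and3P[US Hdis Ur].
have Hsz : forall w, is_child k v w -> last 0 w < size (sort leq S).
  by move=> w /is_childP[_ Hl]; rewrite size_sort HS.
split.
  move=> w; rewrite HC'; case: (eqVneq w v) => [//|Hwv].
  case: ifP => Hc //.
  rewrite cats1 rcons_uniq HU1 andbT; apply/negP => Hin.
  by move/eqP: Hwv; apply; apply: (HU2 _ _ _ Hin); apply/S_in_Cv/new_in_S.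
have Hdisj : forall x, x \in S -> x \in rest -> False.
  by move=> x HxS Hxr; move/hasP: Hdis; apply; exists x.
move=> w1 w2 x H1 H2.
case/step_mem2: H1 => [[E1 Hx1]|[N1 Hx1]|[Hc1 E1]];
case/step_mem2: H2 => [[E2 Hx2]|[N2 Hx2]|[Hc2 E2]].
- by rewrite E1 E2.
- by rewrite E1 (HU2 _ _ _ (rest_in_Cv Hx1) Hx2).
- by exfalso; apply: (Hdisj x) => //; rewrite E2; exact: new_in_S.
- by rewrite E2 (HU2 _ _ _ Hx1 (rest_in_Cv Hx2)).
- exact: (HU2 _ _ _ Hx1 Hx2).
- by exfalso; apply: N1; apply: (HU2 _ _ _ Hx1); rewrite E2; apply/S_in_Cv/new_in_S.
- by exfalso; apply: (Hdisj x) => //; rewrite E1; exact: new_in_S.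
- by exfalso; apply: N2; apply: (HU2 _ _ _ Hx2); rewrite E1; apply/S_in_Cv/new_in_S.
- have [Ew1 _] := is_childP Hc1; have [Ew2 _] := is_childP Hc2.
  move: E1; rewrite E2 => /eqP; rewrite nth_uniq ?Hsz ?sort_uniq // => /eqP El.
  by rewrite Ew1 Ew2 El.
Qed.

End Step.

Definition sub (u : vertex) (C : config) : config := fun w => C (u ++ w).
Definition upd (C : config) (X : seq nat) : config :=
  fun w => if w == [::] then X else C w.
Definition insub (u w : vertex) := take (size u) w == u.

Lemma insubP u w : insub u w -> w = u ++ drop (size u) w.
Proof. by move/eqP=> H; rewrite -{1}(cat_take_drop (size u) w) H. Qed.

Lemma insub_cat u w : insub u (u ++ w).
Proof. by rewrite /insub take_size_cat. Qed.

Lemma insub_size u w : insub u w -> size u <= size w.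
Proof. move/eqP=> H; rewrite -{1}H size_take; case: ifP => ? //; lia. Qed.

Lemma is_child_cat k u v w : is_child k (u ++ v) (u ++ w) = is_child k v w.
Proof.
case: w => [|a w].
  rewrite cats0 /is_child /= size_cat; case: eqP => //; lia.
rewrite /is_child !size_cat take_cat ltnNge leq_addr /= addKn eqseq_cat // eqxx /=.
rewrite last_cat /= addnS eqSS eqn_add2l.
by case: (lastP w).
Qed.

Lemma child_insub k u v w : is_child k v (u ++ w) -> w != [::] -> insub u v.
Proof.
move=> /is_childP[E _]; case/lastP: w E => [//|w' j].
rewrite -rcons_cat last_rcons => /eqP; rewrite eqseq_rcons => /andP[/eqP <- _] _.
exact: insub_cat.
Qed.

Lemma insub_child k u v w : is_child k v w -> insub u v -> insub u w.
Proof.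
move=> /is_childP[-> _] /insubP ->.
by rewrite /insub -cats1 -catA take_size_cat.
Qed.

Lemma restrict k (C C'' : config) : reaches k C C'' -> Uniq C -> forall u,
  exists A : seq nat, [/\ uniq A,
    (forall a, a \in A -> exists w, a \in C w /\ ~~ insub u w) &
    forall X, perm_eq X (C u ++ A) -> exists D' : config,
      [/\ reaches k (upd (sub u C) X) D',
          (forall w, w != [::] -> D' w = C'' (u ++ w)) &
          perm_eq (D' [::]) (C'' u)]].
Proof.
elim=> [C0|C0 C1 C2 Hst Hr IH] HU u.
  exists [::]; split => // X HX; exists (upd (sub u C0) X); split.
  - exact: reaches_refl.
  - by move=> w Hw; rewrite /upd (negbTE Hw).
  - by rewrite /upd eqxx -(cats0 (C0 u)).
have HU1 : Uniq C1.
  by case: Hst => v [S [rest [HS Hp HC']]]; exact: (Uniq_step HS Hp HC').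
have [A' [UA' LA' RA']] := IH HU1 u.
case: (Hst) => v [S [rest [HS Hp HC']]].
have Hloc : forall a w, a \in C1 w -> ~~ insub u w -> ~~ insub u v ->
    exists w, a \in C0 w /\ ~~ insub u w.
  move=> a w Ha Hw Hv; case: (step_mem HS Hp HC' Ha) => [H|[_ H]].
    by exists w.
  by exists v.
have Hloc2 : forall a w, a \in C1 w -> ~~ insub u w -> insub u v ->
    exists w, a \in C0 w /\ ~~ insub u w.
  move=> a w Ha Hw Hv; case: (step_mem HS Hp HC' Ha) => [H|[Hc H]].
    by exists w.
  by rewrite (insub_child Hc Hv) in Hw.
have Hsame : ~~ insub u v -> forall X, upd (sub u C1) X = upd (sub u C0) X.
  move=> Nv X; apply: funext => w; rewrite /upd /sub.
  case: eqP => // /eqP Hw; rewrite HC'.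
  case: eqP => [E|_]; first by rewrite -E insub_cat in Nv.
  case: ifP => // Hc; by rewrite (child_insub Hc Hw) in Nv.
have Huu : insub u u by rewrite /insub take_size.
case: (boolP (insub u v)) => Hin; last first.
  case: (boolP (is_child k v u)) => Hcu.
    set y := nth 0 (sort leq S) (last 0 u).
    have C1u : C1 u = C0 u ++ [:: y].
      rewrite HC' Hcu; case: eqP => // E; by rewrite -E Huu in Hin.
    exists (y :: A'); split.
    - rewrite /= UA' andbT; apply/negP => Hy; have [w [Hw Nw]] := LA' _ Hy.
      have Hy1 : y \in C1 u by rewrite C1u mem_cat inE eqxx orbT.
      by rewrite -((HU1.2) _ _ _ Hy1 Hw) Huu in Nw.
    - move=> a; rewrite inE => /orP[/eqP ->|Ha].
        by exists v; split => //; apply/(S_in_Cv Hp)/(new_in_S HS Hcu).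
      have [w [Hw Nw]] := LA' _ Ha; exact: (Hloc _ _ Hw Nw Hin).
    - move=> X HX; have HX' : perm_eq X (C1 u ++ A') by rewrite C1u -catA.
      have [D' [R1 R2 R3]] := RA' X HX'; exists D'; split => //.
      by rewrite -(Hsame Hin).
  have C1u : C1 u = C0 u.
    rewrite HC' (negbTE Hcu); case: eqP => // E; by rewrite -E Huu in Hin.
  exists A'; split => //.
  - move=> a Ha; have [w [Hw Nw]] := LA' _ Ha; exact: (Hloc _ _ Hw Nw Hin).
  - move=> X HX; have HX' : perm_eq X (C1 u ++ A') by rewrite C1u.
    have [D' [R1 R2 R3]] := RA' X HX'; exists D'; split => //.
    by rewrite -(Hsame Hin).
set v' := drop (size u) v.
have Ev : v = u ++ v' := insubP Hin.
exists A'; split => //.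
  move=> a Ha; have [w [Hw Nw]] := LA' _ Ha; exact: (Hloc2 _ _ Hw Nw Hin).
move=> X HX.
set X' := if v' == [::] then rest ++ A' else X.
have HX' : perm_eq X' (C1 u ++ A').
  rewrite /X' HC'; case: eqP => Hv'.
    by rewrite Ev Hv' cats0 eqxx.
  have -> : (u == v) = false.
    by apply/negbTE/eqP => E; apply: Hv'; move: Ev; rewrite -E -{1}(cats0 u) => /eqP; rewrite eqseq_cat // eqxx /= => /eqP <-.
  have -> : is_child k v u = false.
    apply/negbTE/negP => /is_childP[E _]; have := congr1 size E.
    rewrite size_rcons Ev size_cat; lia.
  exact: HX.
have [D' [R1 R2 R3]] := RA' X' HX'; exists D'; split => //.
apply: reaches_step R1.
exists v', S, (if v' == [::] then rest ++ A' else rest); split => //.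
  rewrite /upd /sub; case: eqP => Hv'.
    apply: (perm_trans HX); rewrite catA perm_cat2r; move: Hp.
    by rewrite Ev Hv' cats0.
  by rewrite -Ev.
move=> w; case: (eqVneq w [::]) => [->|Hw].
  rewrite /upd /X' eqxx; case: eqP => [<-|Hv']; first by rewrite eqxx.
  by case: eqP => [E|_]; [move: Hv'; rewrite -E | rewrite /is_child /=].
rewrite /upd /sub (negbTE Hw) HC' Ev eqseq_cat // eqxx /= is_child_cat.
case: eqP => [E|_]; first by rewrite -E (negbTE Hw).
case: w Hw => [//|a w] _; rewrite last_cat /=.
by case: ifP.
Qed.

Definition mapC (f : nat -> nat) (C : config) : config := fun w => map f (C w).

Lemma fire_map k f C C' : {homo f : x y / x <= y} ->
  fire_step k C C' -> fire_step k (mapC f C) (mapC f C').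
Proof.
move=> Hf [v [S [rest [HS Hp HC']]]].
have Hsort : sort leq (map f S) = map f (sort leq S).
  apply: sorted_eq; [exact: leq_trans|exact: anti_leq| | |].
  - by apply: sort_sorted; exact: leq_total.
  - by apply: (homo_sorted Hf); apply: sort_sorted; exact: leq_total.
  - rewrite perm_sort; apply: perm_map; by rewrite perm_sym perm_sort.
exists v, (map f S), (map f rest); split.
- by rewrite size_map.
- by rewrite /mapC -map_cat perm_map.
move=> w; rewrite /mapC HC'; case: ifP => // _; case: ifP => // /is_childP[_ Hl].
by rewrite map_cat /= Hsort (nth_map 0) // size_sort HS.
Qed.

Lemma reaches_map k f C C' : {homo f : x y / x <= y} ->
  reaches k C C' -> reaches k (mapC f C) (mapC f C').
Proof.
move=> Hf; elim=> [C0|C0 C1 C2 Hs _ IH]; first exact: reaches_refl.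
exact: reaches_step (fire_map Hf Hs) IH.
Qed.

Definition rk (A : seq nat) x := count (fun a => a <= x) A.

Lemma rk_homo A : {homo rk A : x y / x <= y}.
Proof. move=> x y Hxy; apply: sub_count => a /= Ha; exact: leq_trans Ha Hxy. Qed.

Lemma rk_strict A x y : x \in A -> y < x -> rk A y < rk A x.
Proof.
move=> Hx Hyx.
have H := count_predUI (fun a => a <= y) (pred1 x) A.
have H0 : count (predI (fun a => a <= y) (pred1 x)) A = 0.
  apply/eqP; rewrite -leqn0 leqNgt -has_count; apply/hasP => [[a _ /= /andP[Ha /eqP E]]].
  subst a; lia.
have H1 : 0 < count (pred1 x) A by rewrite -has_count; apply/hasP; exists x => //=.
have H2 : count (predU (fun a => a <= y) (pred1 x)) A <= rk A x.
  apply: sub_count => a /= /orP[Ha|/eqP ->] //; lia.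
move: H H0 H1 H2; rewrite /rk.
move=> E1 E2 E3 E4; rewrite E2 addn0 in E1; rewrite E1 in E4; apply: leq_trans E4; by rewrite -addn1 leq_add2l.
Qed.

Lemma rk_sorted s : sorted ltn s -> map (rk s) s = iota 1 (size s).
Proof.
elim: s => [//|a s IH] /= Hp.
have Hall := order_path_min ltn_trans Hp.
have Hs := path_sorted Hp.
rewrite /rk /= leqnn.
have -> : count (fun b => b <= a) s = 0.
  apply/eqP; rewrite -leqn0 leqNgt -has_count; apply/hasP => [[b Hb /= Hba]].
  by move/allP: Hall => /(_ _ Hb) /=; lia.
congr (_ :: _).
rewrite -[2]/(1 + 1) iotaDl -IH // -map_comp; apply/eq_in_map => x Hx /=.
move/allP: Hall => /(_ _ Hx) /= Hax; rewrite ltnW //.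
Qed.

Lemma rk_sort A : uniq A -> map (rk A) (sort leq A) = iota 1 (size A).
Proof.
move=> HA.
have E : rk A =1 rk (sort leq A).
  move=> x; rewrite /rk; apply/permP; by rewrite perm_sym perm_sort.
rewrite (eq_map E) rk_sorted ?size_sort //.
rewrite ltn_sorted_uniq_leq sort_uniq HA /=; apply: sort_sorted; exact: leq_total.
Qed.

Lemma lds_ge s (m : bitseq) : size m = size s -> sorted gtn (mask m s) ->
  size (mask m s) <= lds s.
Proof.
move=> Hm Hs; have Hm' : size m == size s by apply/eqP.
exact: (@leq_bigmax_cond _ (fun t : (size s).-tuple bool => sorted gtn (mask t s))
   (fun t => size (mask t s)) (Tuple Hm')).
Qed.

Lemma lds_le s b : (forall m : bitseq, size m = size s -> sorted gtn (mask m s) ->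
  size (mask m s) <= b) -> lds s <= b.
Proof. by move=> H; apply/bigmax_leqP => t Ht; apply: H => //; rewrite size_tuple. Qed.

Lemma lds_size s : lds s <= size s.
Proof. apply: lds_le => m _ _; exact/size_subseq/mask_subseq. Qed.

Lemma gtn_trans : transitive gtn.
Proof. move=> x y z /= H1 H2; exact: ltn_trans H1. Qed.

Lemma lds_cat s1 s2 : lds (s1 ++ s2) <= lds s1 + lds s2.
Proof.
apply: lds_le => m Hm Hs.
have Hsz : size (take (size s1) m) = size s1 by rewrite size_takel // Hm size_cat leq_addr.
move: Hs; rewrite -(cat_take_drop (size s1) m) mask_cat // => Hs.
have [H1 H2] := cat_sorted2 Hs.
rewrite size_cat leq_add //; apply: lds_ge => //.
by rewrite size_drop Hm size_cat addKn.
Qed.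

Lemma lds_map (f : nat -> nat) s : (forall x y, x \in s -> y \in s -> y < x -> f y < f x) ->
  lds s <= lds (map f s).
Proof.
move=> Hf; apply: lds_le => m Hm Hs.
rewrite -(size_map f) map_mask; apply: lds_ge; first by rewrite size_map.
rewrite -map_mask; apply: (homo_sorted_in (P := mem s)) Hs.
  by move=> x y Hx Hy /= H; apply: Hf.
by apply/allP => x /(mem_subseq (mask_subseq m s)).
Qed.

Lemma D_ge k n C : reachable_stable k n C -> lds (perm_of k n C) <= D k n.
Proof.
move=> HC.
have Hlt : lds (perm_of k n C) < (k ^ n).+1.
  by rewrite ltnS (leq_trans (lds_size _)) // /perm_of size_map size_iota.
apply: (@leq_bigmax_cond _ _ (fun m : 'I_(k ^ n).+1 => m) (Ordinal Hlt)) => /=.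
by apply: asboolT; exists C.
Qed.

Lemma digits_eq k m n : 1 < k -> (forall j, (m %/ k ^ j) %% k = (j == n)) -> m = k ^ n.
Proof.
move=> k1 Hd.
have k0 : 0 < k by lia.
have Hq : forall j, m %/ k ^ j = m %/ k ^ j.+1 * k + (j == n).
  move=> j; rewrite -Hd expnSr divnMA; exact: divn_eq.
have Hz : forall i, n < m + n + 1 - i -> m %/ k ^ (m + n + 1 - i) = 0.
  elim=> [|i IH] Hi.
    rewrite subn0 divn_small //; apply: (leq_trans (ltn_expl m k1)).
    by rewrite leq_exp2l //; lia.
  have -> : m + n + 1 - i.+1 = (m + n + 1 - i).-1 by lia.
  have E := Hq (m + n + 1 - i).-1.
  rewrite (_ : (m + n + 1 - i).-1.+1 = m + n + 1 - i) in E; last by lia.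
  rewrite E IH; last by lia.
  have -> : ((m + n + 1 - i).-1 == n) = false by apply/negbTE/eqP; lia.
  by [].
have Hn1 : m %/ k ^ n.+1 = 0.
  have := Hz m; have -> : m + n + 1 - m = n.+1 by lia.
  by apply; lia.
have Hn : m %/ k ^ n = 1 by rewrite Hq Hn1 eqxx.
have Hd2 : forall i, i <= n -> m %/ k ^ (n - i) = k ^ i.
  elim=> [|i IH] Hi; first by rewrite subn0 Hn expn0.
  have E := Hq (n - i.+1).
  rewrite (_ : (n - i.+1).+1 = n - i) in E; last by lia.
  rewrite E IH; last by lia.
  have -> : (n - i.+1 == n) = false by apply/negbTE/eqP; lia.
  by rewrite addn0 expnSr.
by have := Hd2 n (leqnn n); rewrite subnn expn0 divn1.
Qed.

Lemma pow_digit k p n j : 1 < k -> (k ^ (p + n) %/ k ^ (p + j)) %% k = (j == n).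
Proof.
move=> k1; have k0 : 0 < k by lia.
case: (leqP j n) => Hj.
  have -> : p + n = (n - j) + (p + j) by lia.
  rewrite expnD mulnK ?expn_gt0 ?k0 //.
  case: (eqVneq j n) => [->|Hne]; first by rewrite subnn expn0 modn_small.
  have -> : n - j = (n - j).-1.+1 by lia.
  by rewrite expnSr modnMl.
rewrite divn_small ?mod0n; last by rewrite ltn_exp2l //; lia.
by case: eqP => //; lia.
Qed.

Lemma reaches_origin k C C' : reaches k C C' -> forall x w, x \in C' w ->
  exists w0, x \in C w0.
Proof.
elim=> [C0 x w H|C0 C1 C2 Hs _ IH x w H]; first by exists w.
have [w1 H1] := IH _ _ H.
case: Hs => v [S [rest [HS Hp HC']]].
case: (step_mem HS Hp HC' H1) => [H2|[_ H2]]; [by exists w1|by exists v].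
Qed.

Lemma lv_split k p n t j : 0 < k -> j < k ^ n ->
  layer_vertex k (p + n) (t * k ^ n + j) = layer_vertex k p t ++ layer_vertex k n j.
Proof.
move=> k0 Hj; rewrite /layer_vertex iotaD map_cat; congr (_ ++ _).
  apply/eq_in_map => i; rewrite mem_iota add0n => /andP[_ Hi].
  rewrite (_ : p + n - i.+1 = n + (p - i.+1)); last by lia.
  by rewrite expnD divnMA divnMDl ?expn_gt0 ?k0 // (divn_small Hj) addn0.
rewrite (addnC 0 p) iotaDl -map_comp; apply/eq_in_map => i.
rewrite mem_iota add0n => /andP[_ Hi] /=.
rewrite (_ : p + n - (p + i).+1 = n - i.+1); last by lia.
set e := n - i.+1.
rewrite (_ : t * k ^ n = t * k ^ i * k * k ^ e); last first.
  by rewrite -!mulnA -expnS -expnD; congr (_ * k ^ _); lia.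
by rewrite divnMDl ?expn_gt0 ?k0 // modnMDl.
Qed.

Lemma lds_blocks (g : nat -> nat) a b B :
  (forall t, t < a -> lds [seq g (t * b + j) | j <- iota 0 b] <= B) ->
  lds [seq g x | x <- iota 0 (a * b)] <= a * B.
Proof.
elim: a => [|a IH] H; first by rewrite mul0n /= (leq_trans (lds_size _)).
rewrite mulSnr iotaD map_cat (leq_trans (lds_cat _ _)) // mulSnr leq_add //.
  by apply: IH => t Ht; apply: H; lia.
rewrite add0n -{1}(addn0 (a * b)) iotaDl -map_comp; exact: H.
Qed.

Lemma tree_cat k a b : tree k (a ++ b) = tree k a && tree k b.
Proof. by rewrite /tree all_cat. Qed.

Lemma block_bound k p n C t : 1 < k -> 0 < n -> 0 < p ->
  reaches k (init_config k (p + n)) C -> stable k C ->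
  lds [seq head 0 (C (layer_vertex k p t ++ layer_vertex k n j)) | j <- iota 0 (k ^ n)]
    <= D k n.
Proof.
move=> k1 n0 p0 HR Hst; have k0 : 0 < k by lia.
set u := layer_vertex k p t.
have Hsu : size u = p by rewrite size_map size_iota.
have Hun : u != [::] by rewrite -size_eq0 Hsu; lia.
have Htu : tree k u by apply/allP => x /mapP[i _ ->]; exact: ltn_pmod.
have Hlvs : forall j, size (layer_vertex k n j) = n by move=> j; rewrite size_map size_iota.
have Htlv : forall j, tree k (layer_vertex k n j).
  by move=> j; apply/allP => x /mapP[i _ ->]; exact: ltn_pmod.
have Hinv : Inv k (k ^ (p + n)) (init_config k (p + n)).
  exists (fun _ => 0) => w; rewrite muln0 addn0 /init_config.
  case: w => [|a w] /=; first by rewrite size_iota.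
  by rewrite /inflow; case: ifP.
have GS := Inv_stable k0 (Inv_reaches k0 HR Hinv) Hst.
have HUinit : Uniq (init_config k (p + n)).
  split=> [w|w1 w2 x].
    by rewrite /init_config; case: ifP => _ //; exact: iota_uniq.
  case: (eqVneq w1 [::]) => [->|Hw1]; last by rewrite /init_config (negbTE Hw1).
  case: (eqVneq w2 [::]) => [->|Hw2] //; by rewrite /init_config (negbTE Hw2).
have [A [UA LA RA]] := restrict HR HUinit u.
have Hiu : init_config k (p + n) u = [::] by rewrite /init_config (negbTE Hun).
set X := sort leq A.
have HX : perm_eq X (init_config k (p + n) u ++ A) by rewrite Hiu /= /X perm_sort.
have [D' [R1 R2 R3]] := RA X HX.
have HE0 : forall w, w != [::] -> upd (sub u (init_config k (p + n))) X w = [::].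
  move=> w Hw; rewrite /upd (negbTE Hw) /sub /init_config.
  case: eqP => // E; have := congr1 size E; rewrite size_cat Hsu /=; lia.
have Hinv2 : Inv k (size X) (upd (sub u (init_config k (p + n))) X).
  exists (fun _ => 0) => w; rewrite muln0 addn0.
  case: w => [|a w]; first by rewrite /upd.
  by rewrite HE0 //= /inflow; case: ifP.
have Hst' : stable k D'.
  move=> w; case: (eqVneq w [::]) => [->|Hw]; first by rewrite (perm_size R3); exact: Hst.
  rewrite R2 //; exact: Hst.
have SS := Inv_stable k0 (Inv_reaches k0 R1 Hinv2) Hst'.
have HsX : size X = k ^ n.
  apply: (digits_eq k1) => j.
  have Ht : tree k (nseq j 0) by rewrite /tree all_nseq k0 orbT.
  have SSj := SS _ Ht; rewrite size_nseq in SSj; rewrite -SSj.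
  have -> : size (D' (nseq j 0)) = size (C (u ++ nseq j 0)).
    case: j {Ht SSj} => [|j]; first by rewrite cats0 (perm_size R3).
    by rewrite R2.
  rewrite GS; first by rewrite size_cat Hsu size_nseq pow_digit.
  by rewrite tree_cat Htu /tree all_nseq k0 orbT.
have HsA : size A = k ^ n by rewrite -HsX size_sort.
have Hstart : mapC (rk A) (upd (sub u (init_config k (p + n))) X) = init_config k n.
  apply: funext => w; case: (eqVneq w [::]) => [->|Hw].
    by rewrite /mapC /upd eqxx /X rk_sort // HsA /init_config eqxx.
  by rewrite /mapC HE0 // /init_config (negbTE Hw).
have HR' : reaches k (init_config k n) (mapC (rk A) D').
  rewrite -Hstart; exact: reaches_map (@rk_homo A) R1.
have Hst2 : stable k (mapC (rk A) D') by move=> w; rewrite /mapC size_map; exact: Hst'.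
have Hb := D_ge (conj HR' Hst2).
apply: leq_trans Hb.
set blk := [seq head 0 (C (u ++ layer_vertex k n j)) | j <- iota 0 (k ^ n)].
have Hsz1 : forall j, size (C (u ++ layer_vertex k n j)) = 1.
  move=> j; rewrite GS ?size_cat ?Hsu ?Hlvs ?pow_digit ?eqxx //.
  by rewrite tree_cat Htu Htlv.
have Hpo : perm_of k n (mapC (rk A) D') = map (rk A) blk.
  rewrite /perm_of /blk -map_comp; apply/eq_in_map => j _ /=.
  rewrite /mapC R2; last by rewrite -size_eq0 Hlvs; lia.
  by move: (Hsz1 j); case: (C _) => [|c [|]].
rewrite Hpo; apply: lds_map => x y Hx _ Hyx; apply: rk_strict => //.
move/mapP: Hx => [j _ ->].
have Hin : head 0 (C (u ++ layer_vertex k n j)) \in D' (layer_vertex k n j).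
  rewrite R2; last by rewrite -size_eq0 Hlvs; lia.
  by move: (Hsz1 j); case: (C _) => [|c [|]] //= _; rewrite mem_head.
have [w0 Hw0] := reaches_origin R1 Hin.
case: (eqVneq w0 [::]) Hw0 => [->|Hw]; last by rewrite HE0.
by rewrite /upd eqxx /X mem_sort.
Qed.

Theorem proposition8p2 (k n l : nat) :
  2 <= k -> 1 <= n -> n <= l -> D k l <= D k n * k ^ (l - n).
Proof.
move=> k1 n1 Hnl.
case: (eqVneq n l) => [<-|Hne]; first by rewrite subnn expn0 muln1.
have p0 : 0 < l - n by lia.
move: (subnK Hnl) p0; set p := l - n => Hl p0.
apply/bigmax_leqP => i /asboolP [C [[HR Hst] Hi]]; rewrite -Hi.
rewrite -Hl in HR *.
rewrite /perm_of expnD (mulnC (D k n)).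
apply: (lds_blocks (g := fun x => head 0 (C (layer_vertex k (p + n) x)))) => t Ht.
have -> : [seq head 0 (C (layer_vertex k (p + n) (t * k ^ n + j))) | j <- iota 0 (k ^ n)]
   = [seq head 0 (C (layer_vertex k p t ++ layer_vertex k n j)) | j <- iota 0 (k ^ n)].
  apply/eq_in_map => j; rewrite mem_iota => /andP[_ Hj]; rewrite lv_split //; lia.
exact: block_bound.
Qed.
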